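(* Let $H$ be an ASC-hypergraph and $M\subseteq H$. Then the following are equivalent: (a) every $M$-antichain misses $H$, and $|M|=|\bigcup H|$; (b) $M$ is a construction of $H$.
   Context: A hypergraph is a finite set $H$ of nonempty subsets of some finite set; its carrier is $\bigcup H$. For a family $F$ and set $Y$, $F_Y=\{X\in F\mid X\subseteq Y\}$. A hypergraph partition of $H$ is a partition $\{H_1,\dots,H_n\}$ ($n\ge0$) of the set $H$ with $\{\bigcup H_1,\dots,\bigcup H_n\}$ a partition of $\bigcup H$; $H$ is connected if it has exactly one hypergraph partition (the empty hypergraph is connected); the finest hypergraph partition is the unique one whose blocks are connected. $H$ is atomic if $\{x\}\in H$ for all $x\in\bigcup H$; saturated if $X_1,X_2\in H$ with $X_1\cap X_2\neq\emptyset$ imply $X_1\cup X_2\in H$. An ASC-hypergraph is one that is atomic, saturated and connected. Constructions of an atomic $H$, by induction on $|\bigcup H|$: (0) $\emptyset$ is the only construction of $\emptyset$; (1) if $|\bigcup H|\ge1$, $H$ connected, $x\in\bigcup H$, $K$ a construction of $H_{\bigcup H\setminus\{x\}}$, then $K\cup\{\bigcup H\}$ is a construction of $H$; (2) if $H$ is not connected with finest hypergraph partition $\{H_1,\dots,H_n\}$, $n\ge2$, and $K_i$ is a construction of $H_i$, then $K_1\cup\dots\cup K_n$ is a construction of $H$. For $M\subseteq H$, an $M$-antichain is a subset $S\subseteq M$ with $|S|\ge2$ such that no member of $S$ is a subset of another member of $S$; it misses $H$ when $\bigcup S\notin H$. *)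

(* Defs.v *)
From mathcomp Require Import all_boot.
Set Implicit Arguments. Unset Strict Implicit. Unset Printing Implicit Defensive.

Section Hyper.
Variable T : finType.

Definition hypergraph (H : {set {set T}}) : Prop := set0 \notin H.

Definition carrier (H : {set {set T}}) : {set T} := \bigcup_(X in H) X.

Definition restr (F : {set {set T}}) (Y : {set T}) : {set {set T}} :=
  [set X in F | X \subset Y].

(* P = {H_1,...,H_n} is a partition of the set H, and the family
   (\bigcup H_i)_i is a partition of \bigcup H (distinct blocks have
   distinct, hence disjoint, carriers). *)
Definition hpartition (P : {set {set {set T}}}) (H : {set {set T}}) : Prop :=
  [/\ partition P H,
      {in P &, injective carrier} &
      partition [set carrier Hi | Hi in P] (carrier H)].

Definition connected (H : {set {set T}}) : Prop :=
  exists! P, hpartition P H.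

Definition finest_hpartition (P : {set {set {set T}}}) (H : {set {set T}}) : Prop :=
  hpartition P H /\ (forall Hi, Hi \in P -> connected Hi).

Definition atomic (H : {set {set T}}) : Prop :=
  forall x, x \in carrier H -> [set x] \in H.

Definition saturated (H : {set {set T}}) : Prop :=
  forall X1 X2, X1 \in H -> X2 \in H -> X1 :&: X2 != set0 -> X1 :|: X2 \in H.

Definition ASC (H : {set {set T}}) : Prop :=
  [/\ atomic H, saturated H & connected H].

Inductive construction : {set {set T}} -> {set {set T}} -> Prop :=
| constr_empty : construction set0 set0
| constr_conn (H K : {set {set T}}) (x : T) :
    atomic H -> carrier H != set0 -> connected H -> x \in carrier H ->
    construction (restr H (carrier H :\ x)) K ->
    construction H (K :|: [set carrier H])
| constr_disc (H : {set {set T}}) (P : {set {set {set T}}})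
    (Kf : {set {set T}} -> {set {set T}}) :
    atomic H -> ~ connected H -> finest_hpartition P H -> 2 <= #|P| ->
    (forall Hi, Hi \in P -> construction Hi (Kf Hi)) ->
    construction H (\bigcup_(Hi in P) Kf Hi).

Definition antichain (M S : {set {set T}}) : Prop :=
  [/\ S \subset M, 2 <= #|S| &
      forall X Y, X \in S -> Y \in S -> X \subset Y -> X = Y].

Definition misses (H S : {set {set T}}) : Prop := carrier S \notin H.

End Hyper.

(* Main.v *)
Require Import Defs.
From mathcomp Require Import all_boot.
Set Implicit Arguments. Unset Strict Implicit. Unset Printing Implicit Defensive.

Section Aux.
Variable T : finType.
Implicit Types H M K S G : {set {set T}}.

Lemma carrierP H x : reflect (exists2 X, X \in H & x \in X) (x \in carrier H).
Proof. exact: bigcupP. Qed.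

Lemma sub_carrier H X : X \in H -> X \subset carrier H.
Proof. by move=> XH; apply: (bigcup_sup X). Qed.

Lemma carrierS H K : H \subset K -> carrier H \subset carrier K.
Proof.
move=> HK; apply/subsetP=> x /carrierP [X XH xX].
by apply/carrierP; exists X => //; apply: (subsetP HK).
Qed.

Lemma restr_sub H Y : restr H Y \subset H.
Proof. by apply/subsetP=> X; rewrite inE => /andP[]. Qed.

Lemma in_restr H Y X : (X \in restr H Y) = (X \in H) && (X \subset Y).
Proof. by rewrite inE. Qed.

Lemma carrier_restr H Y : atomic H -> carrier (restr H Y) = Y :&: carrier H.
Proof.
move=> aH; apply/setP=> x; rewrite inE; apply/carrierP/andP.
  case=> X; rewrite in_restr => /andP[XH XY] xX; split; first exact: (subsetP XY).
  by apply/carrierP; exists X.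
case=> xY xH; exists [set x]; last by rewrite inE.
by rewrite in_restr aH // sub1set.
Qed.

Lemma hyper_sub H K : hypergraph H -> K \subset H -> hypergraph K.
Proof. by rewrite /hypergraph => h0 KH; apply: contra h0; apply: (subsetP KH). Qed.

Lemma atomic_restr H Y : atomic H -> atomic (restr H Y).
Proof.
move=> aH x; rewrite carrier_restr // inE => /andP[xY xH].
by rewrite in_restr aH // sub1set.
Qed.

Lemma saturated_restr H Y : saturated H -> saturated (restr H Y).
Proof.
move=> sH X1 X2; rewrite !in_restr => /andP[X1H X1Y] /andP[X2H X2Y] ne.
by rewrite sH // subUset X1Y.
Qed.

Lemma nonempty_mem H X : hypergraph H -> X \in H -> exists x, x \in X.
Proof.
move=> h0 XH; case: (set_0Vmem X) => [E|[x xX]]; last by exists x.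
by move: h0; rewrite /hypergraph -E XH.
Qed.


Section HP.
Variables (P : {set {set {set T}}}) (H : {set {set T}}).
Hypotheses (h0 : hypergraph H) (hP : hpartition P H).

Lemma hp_sub Hi : Hi \in P -> Hi \subset H.
Proof.
case: hP => /and3P[/eqP <- _ _] _ _ HiP.
by apply/subsetP=> X XHi; apply/bigcupP; exists Hi.
Qed.

Lemma hp_cover X : X \in H -> exists2 Hi, Hi \in P & X \in Hi.
Proof. by case: hP => /and3P[/eqP <- _ _] _ _ /bigcupP. Qed.

Lemma hp_block Hi Hj X : Hi \in P -> Hj \in P -> X \in Hi -> X \in Hj -> Hi = Hj.
Proof.
case: hP => /and3P[_ /trivIsetP tI _] _ _ Pi Pj Xi Xj.
apply/eqP; apply: contraTT isT => ne.
by have:= tI _ _ Pi Pj ne => /disjointFr/(_ Xi); rewrite Xj.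
Qed.

Lemma hp_carrier Hi X : Hi \in P -> X \in H -> X \subset carrier Hi -> X \in Hi.
Proof.
move=> Pi XH XC; have [Hj Pj Xj] := hp_cover XH.
have [x xX] := nonempty_mem h0 XH.
have xi := subsetP XC x xX.
have xj : x \in carrier Hj by apply/carrierP; exists X.
case: hP => _ inj /and3P[_ /trivIsetP tI _].
have eqc : carrier Hi = carrier Hj.
  apply/eqP; apply: contraTT isT => ne.
  have := tI _ _ (imset_f (@carrier T) Pi) (imset_f (@carrier T) Pj) ne.
  by move/disjointFr/(_ xi); rewrite xj.
by rewrite (inj _ _ Pi Pj eqc).
Qed.

Lemma hp_card : #|carrier H| = \sum_(Hi in P) #|carrier Hi|.
Proof.
case: hP => _ inj /card_partition ->.
by rewrite big_imset.
Qed.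

Lemma hp_card_union (Kf : {set {set T}} -> {set {set T}}) :
  (forall Hi, Hi \in P -> Kf Hi \subset Hi) ->
  #|\bigcup_(Hi in P) Kf Hi| = \sum_(Hi in P) #|Kf Hi|.
Proof.
move=> sub.
pose F Hi := if Hi \in P then Kf Hi else set0.
have -> : \bigcup_(Hi in P) Kf Hi = \bigcup_Hi F Hi.
  by rewrite big_mkcond.
rewrite -sum1_card partition_disjoint_bigcup.
  rewrite [RHS]big_mkcond; apply: eq_bigr => Hi _; rewrite /F.
  by case: ifP => _; rewrite sum1_card // cards0.
move=> i j ne; rewrite /F; case: ifP => Pi; last by apply/pred0P => X; rewrite /= inE.
case: ifP => Pj; last by apply/pred0P => X; rewrite /= inE andbF.
apply/pred0P => X /=; apply/andP=> [[Xi Xj]].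
move: ne; rewrite (hp_block Pi Pj (subsetP (sub _ Pi) _ Xi) (subsetP (sub _ Pj) _ Xj)).
by rewrite eqxx.
Qed.

End HP.


Lemma single_hp G : hypergraph G -> G != set0 -> hpartition [set G] G.
Proof.
move=> h0 ne; split.
- by rewrite /partition cover1 eqxx trivIset1 inE eq_sym ne.
- by move=> A B; rewrite !inE => /eqP-> /eqP->.
rewrite imset_set1 /partition cover1 eqxx trivIset1 inE eq_sym.
have [X XG] := set0Pn _ ne.
have [x xX] := nonempty_mem h0 XG.
apply/set0Pn; exists x; apply/carrierP; by exists X.
Qed.

Lemma conn_top G : hypergraph G -> carrier G \in G -> connected G.
Proof.
move=> h0 UG; have ne : G != set0 by apply/set0Pn; exists (carrier G).
exists [set G]; split; first exact: single_hp.
move=> Q hQ.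
have [B QB UB] := hp_cover hQ UG.
have BG : B = G.
  apply/eqP; rewrite eqEsubset (hp_sub hQ QB) /=.
  apply/subsetP=> X XG; apply: (hp_carrier h0 hQ QB XG).
  by apply: subset_trans (sub_carrier XG) (sub_carrier UB).
apply/setP=> B'; rewrite inE; apply/eqP/idP => [->|QB']; first by rewrite -BG.
have [/and3P[_ _ n0] _ _] := hQ.
have [X XB'] : exists X, X \in B'.
  by apply/set0Pn; apply: contraNneq n0 => <-.
have XG := subsetP (hp_sub hQ QB') _ XB'.
rewrite -BG; apply: (hp_block hQ QB' QB XB'); by rewrite BG.
Qed.


Definition mx H := [set Z | maxset (fun A => A \in H) Z].
Definition Pm H := [set restr H Z | Z in mx H].

Section Max.
Variable H : {set {set T}}.
Hypotheses (h0 : hypergraph H) (aH : atomic H) (sH : saturated H).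

Lemma mxP Z : Z \in mx H -> Z \in H /\ forall B, B \in H -> Z \subset B -> B = Z.
Proof. by rewrite inE => /maxsetP. Qed.

Lemma mx_exists X : X \in H -> exists2 Z, Z \in mx H & X \subset Z.
Proof.
move=> XH; have [Z mZ XZ] := maxset_exists (P := fun A => A \in H) XH.
by exists Z; rewrite ?inE.
Qed.

Lemma mx_disj Z Z' : Z \in mx H -> Z' \in mx H -> Z != Z' -> [disjoint Z & Z'].
Proof.
move=> /mxP[ZH mZ] /mxP[ZH' mZ'] ne; apply: contraNT ne => nd.
have ne0 : Z :&: Z' != set0 by rewrite setI_eq0.
have UH := sH ZH ZH' ne0.
by rewrite -(mZ _ UH (subsetUl _ _)) (mZ' _ UH (subsetUr _ _)).
Qed.

Lemma carrier_restr_top Z : Z \in H -> carrier (restr H Z) = Z.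
Proof. by move=> ZH; rewrite carrier_restr //; apply/setIidPl/sub_carrier. Qed.


Lemma cover_mx : cover (mx H) = carrier H.
Proof.
apply/setP=> x; apply/bigcupP/carrierP => [[Z mZ xZ]|[X XH xX]].
  by exists Z => //; case: (mxP mZ).
have [Z mZ XZ] := mx_exists XH; exists Z => //; exact: (subsetP XZ).
Qed.

Lemma Pm_image : [set carrier Hi | Hi in Pm H] = mx H.
Proof.
rewrite -imset_comp; apply/setP=> Z; apply/imsetP/idP => [[Z' mZ' ->]|mZ].
  by rewrite /= carrier_restr_top //; case: (mxP mZ').
by exists Z => //=; rewrite carrier_restr_top //; case: (mxP mZ).
Qed.

Lemma Pm_hp : hpartition (Pm H) H.
Proof.
split.
- apply/and3P; split.
  + rewrite cover_imset; apply/eqP/setP=> X; apply/bigcupP/idP.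
      by case=> Z _; rewrite in_restr => /andP[].
    move=> XH; have [Z mZ XZ] := mx_exists XH.
    by exists Z => //; rewrite in_restr XH.
  + apply/trivIsetP => _ _ /imsetP[Z mZ ->] /imsetP[Z' mZ' ->] ne.
    have nZ : Z != Z' by apply: contraNneq ne => ->.
    have dZ := mx_disj mZ mZ' nZ.
    apply/pred0P => X /=; apply/negP => /andP[].
    rewrite !in_restr => /andP[XH XZ] /andP[_ XZ'].
    have [x xX] := nonempty_mem h0 XH.
    by move/pred0P: dZ => /(_ x) /=; rewrite (subsetP XZ _ xX) (subsetP XZ' _ xX).
  + apply/imsetP=> [[Z mZ e]].
    have [ZH _] := mxP mZ.
    have : Z \in restr H Z by rewrite in_restr ZH subxx.
    by rewrite -e inE.
- move=> _ _ /imsetP[Z mZ ->] /imsetP[Z' mZ' ->].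
  case: (mxP mZ) (mxP mZ') => ZH _ [ZH' _].
  by rewrite !carrier_restr_top // => ->.
rewrite Pm_image /partition cover_mx eqxx /=; apply/andP; split.
  by apply/trivIsetP => Z Z' mZ mZ'; apply: mx_disj.
by apply/negP=> /mxP[]; rewrite (negbTE h0).
Qed.


Lemma Pm_conn Hi : Hi \in Pm H -> connected Hi.
Proof.
case/imsetP=> Z mZ ->; case: (mxP mZ) => ZH _.
apply: conn_top; first exact: hyper_sub h0 (restr_sub _ _).
by rewrite carrier_restr_top // in_restr ZH subxx.
Qed.

Lemma Pm_finest : finest_hpartition (Pm H) H.
Proof. by split; [exact: Pm_hp | exact: Pm_conn]. Qed.

Lemma top_of_conn : H != set0 -> connected H -> carrier H \in H.
Proof.
move=> ne [P0 [hP0 uP0]].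
have e : Pm H = [set H].
  by rewrite -(uP0 _ Pm_hp) (uP0 _ (single_hp h0 ne)).
have [X XH] := set0Pn _ ne; have [Z mZ _] := mx_exists XH.
have : restr H Z \in Pm H by apply: imset_f.
rewrite e inE => /eqP eZ; case: (mxP mZ) => ZH _.
by rewrite -eZ carrier_restr_top // in_restr ZH subxx.
Qed.

Lemma card_Pm : #|Pm H| = #|mx H|.
Proof.
apply: card_in_imset => Z Z' mZ mZ' e.
case: (mxP mZ) (mxP mZ') => ZH _ [ZH' _].
by rewrite -(carrier_restr_top ZH) e carrier_restr_top.
Qed.

Lemma Pm_card2 : H != set0 -> carrier H \notin H -> 1 < #|Pm H|.
Proof.
move=> ne nU; rewrite card_Pm.
have [X XH] := set0Pn _ ne; have [Z mZ _] := mx_exists XH.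
case: (mxP mZ) => ZH _.
have : ~~ (carrier H \subset Z).
  apply: contra nU => sU.
  suff -> : carrier H = Z by [].
  by apply/eqP; rewrite eqEsubset sU sub_carrier.
case/subsetPn => x; rewrite -cover_mx => /bigcupP[Z' mZ' xZ'] xZ.
have nZ : Z' != Z by apply: contraNneq xZ => <-.
apply: (@leq_trans #|[set Z; Z']|); first by rewrite cards2 eq_sym nZ.
by apply: subset_leq_card; apply/subsetP=> W /set2P[]->.
Qed.

Lemma Pm_lt Hi : 1 < #|Pm H| -> Hi \in Pm H -> #|carrier Hi| < #|carrier H|.
Proof.
move=> c2 PHi.
have : 0 < #|Pm H :\ Hi| by move: c2; rewrite (cardsD1 Hi) PHi.
case/card_gt0P => Hj; rewrite !inE => /andP[nji PHj].
case/imsetP: PHi nji => Z mZ -> ; case/imsetP: PHj => Z' mZ' -> nji.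
case: (mxP mZ) (mxP mZ') => ZH _ [ZH' _].
rewrite carrier_restr_top //; apply: proper_card; apply/properP; split.
  exact: sub_carrier.
have [x xZ'] := nonempty_mem h0 ZH'.
exists x; first by apply/carrierP; exists Z'.
have nZ : Z' != Z by apply: contraNneq nji => ->.
by move/pred0P: (mx_disj mZ' mZ nZ) => /(_ x) /=; rewrite xZ' /= => ->.
Qed.

End Max.

Lemma carrier2 (A B : {set T}) : carrier [set A; B] = A :|: B.
Proof.
apply/setP=> x; rewrite inE; apply/carrierP/orP.
  by case=> X /set2P[]->; [left|right].
by case=> h; [exists A | exists B]; rewrite ?inE ?eqxx ?orbT.
Qed.

Lemma antichain2 M (A B : {set T}) : A \in M -> B \in M -> A != B ->
  ~~ (A \subset B) -> ~~ (B \subset A) -> antichain M [set A; B].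
Proof.
move=> AM BM nAB nAs nBs; split.
- by apply/subsetP=> W /set2P[]->.
- by rewrite cards2 nAB.
by move=> X Y /set2P[]-> /set2P[]-> //; rewrite ?(negbTE nAs) ?(negbTE nBs).
Qed.

Section Priv.
Variables (H M : {set {set T}}).
Hypotheses (h0 : hypergraph H) (MH : M \subset H)
  (ac : forall S, antichain M S -> misses H S).

Lemma priv Z : Z \in M ->
  exists2 p, p \in Z & forall Y, Y \in M -> Y \proper Z -> p \notin Y.
Proof.
move=> ZM.
case: (pickP [pred p | (p \in Z) && [forall Y in M, (Y \proper Z) ==> (p \notin Y)]]).
  move=> p /andP[pZ /forall_inP hp]; exists p => // Y YM; exact/implyP/hp.
move=> none; exfalso.
have cov p : p \in Z -> exists2 Y, Y \in [set Y in M | Y \proper Z] & p \in Y.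
  move=> pZ; move: (none p) => /=; rewrite pZ /= => /negbT.
  rewrite negb_forall_in => /exists_inP[Y YM]; rewrite negb_imply negbK => /andP[pY pr].
  by exists Y; rewrite // inE YM.
pose C := [set Y in M | Y \proper Z].
pose C' := [set Y | maxset (fun A => A \in C) Y].
have ZH := subsetP MH _ ZM.
have [p pZ] := nonempty_mem h0 ZH.
have [Y1 CY1 pY1] := cov p pZ.
have [Y' mY' Y1Y'] := maxset_exists (P := fun A => A \in C) CY1.
have CY' : Y' \in C by apply: maxsetp mY'.
have prY' : Y' \proper Z by move: CY'; rewrite inE => /andP[].
have [_ [q qZ qY']] := properP prY'.
have [W1 CW1 qW1] := cov q qZ.
have [W mW W1W] := maxset_exists (P := fun A => A \in C) CW1.
have CW : W \in C by apply: maxsetp mW.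
have qW : q \in W by apply: (subsetP W1W).
have C'M : C' \subset M.
  by apply/subsetP=> A; rewrite inE => /maxsetp; rewrite inE => /andP[].
have carC : carrier C' = Z.
  apply/eqP; rewrite eqEsubset; apply/andP; split.
    apply/subsetP=> x /carrierP[A]; rewrite inE => /maxsetp.
    rewrite inE => /andP[_ /properP[AZ _]] xA; exact: (subsetP AZ).
  apply/subsetP=> x xZ; have [A1 CA1 xA1] := cov x xZ.
  have [A mA A1A] := maxset_exists (P := fun A => A \in C) CA1.
  by apply/carrierP; exists A; rewrite ?inE //; apply: (subsetP A1A).
have nWY : W != Y' by apply: contraNneq qY' => <-.
have : antichain M C'.
  split => //.
    apply: (@leq_trans #|[set W; Y']|); first by rewrite cards2 nWY.
    by apply: subset_leq_card; apply/subsetP=> A /set2P[]->; rewrite inE.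
  move=> X Y; rewrite !inE => mX mY XY.
  by apply/esym/(maxsetsup mX) => //; apply: maxsetp mY.
by move/ac; rewrite /misses carC ZH.
Qed.


Lemma bound : saturated H -> #|M| <= #|carrier M|.
Proof.
move=> sH.
pose pr (Z : {set T}) (p : T) := (p \in Z) && [forall Y in M, (Y \proper Z) ==> (p \notin Y)].
pose f (Z : {set T}) := [pick p | pr Z p].
have fS Z : Z \in M -> exists2 p, f Z = Some p & pr Z p.
  move=> ZM; rewrite /f; case: pickP => [p hp|none]; first by exists p.
  have [p pZ hp] := priv ZM; move: (none p); rewrite /pr pZ /=.
  by move/negbT; rewrite negb_forall_in => /exists_inP[Y YM]; rewrite negb_imply negbK => /andP[prY]; rewrite (negbTE (hp Y YM prY)).
have finj : {in M &, injective f}.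
  move=> Z Z' ZM Z'M e.
  have [p fp /andP[pZ /forall_inP hp]] := fS Z ZM.
  have [p' fp' /andP[pZ' /forall_inP hp']] := fS Z' Z'M.
  move: e; rewrite fp fp' => -[ep]; subst p'.
  apply/eqP; apply: contraTT isT => nZ.
  case sZZ: (Z \subset Z').
    by have := hp' Z ZM; rewrite properEneq nZ sZZ pZ.
  case sZ'Z: (Z' \subset Z).
    have nZ' : Z' != Z by rewrite eq_sym.
    by have := hp Z' Z'M; rewrite properEneq nZ' sZ'Z pZ'.
  have := ac (antichain2 ZM Z'M nZ (negbT sZZ) (negbT sZ'Z)).
  rewrite /misses carrier2 sH ?(subsetP MH) //.
  by apply/set0Pn; exists p; rewrite inE pZ pZ'.
rewrite -(card_in_imset finj) -(card_imset (carrier M) (@Some_inj _)).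
apply: subset_leq_card; apply/subsetP=> _ /imsetP[Z ZM ->].
have [p fp /andP[pZ _]] := fS Z ZM; rewrite fp; apply: imset_f.
by apply/carrierP; exists Z.
Qed.

End Priv.

Lemma carrier0 : carrier (set0 : {set {set T}}) = set0.
Proof. by apply/setP=> x; rewrite inE; apply/carrierP=> -[X]; rewrite inE. Qed.

Lemma sat_block P H Hi : hypergraph H -> saturated H -> hpartition P H ->
  Hi \in P -> saturated Hi.
Proof.
move=> h0 sH hP PHi X1 X2 X1i X2i ne.
have sub := hp_sub hP PHi.
apply: (hp_carrier h0 hP PHi); first by apply: sH => //; apply: (subsetP sub).
by rewrite subUset !sub_carrier.
Qed.

Lemma constr_sound H K : construction H K -> hypergraph H -> saturated H ->
  [/\ K \subset H, #|K| = #|carrier H| & forall S, antichain K S -> misses H S].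
Proof.
elim=> {H K} [|H K x aH ne cH xU c IH|H P Kf aH ncH [hP fP] c2 c IH] h0 sH.
- split; rewrite ?carrier0 ?sub0set ?cards0 // => S [SK c2 _].
  by move: (subset_leq_card SK); rewrite cards0 leqn0 => /eqP e; rewrite e in c2.
- set U := carrier H in ne xU IH *.
  have H0 : H != set0 by apply/eqP => e; move: ne; rewrite /U e carrier0 eqxx.
  have UH : U \in H by apply: top_of_conn.
  have [KH' cK acK] := IH (hyper_sub h0 (restr_sub _ _)) (saturated_restr (Y := U :\ x) sH).
  have cH' : carrier (restr H (U :\ x)) = U :\ x.
    by rewrite carrier_restr //; apply/setIidPl/subsetP=> y; rewrite inE => /andP[].
  have UK : U \notin K.
    apply/negP => UK; move: (subsetP KH' U UK); rewrite in_restr => /andP[_ /subsetP/(_ x xU)].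
    by rewrite !inE eqxx.
  have KH : K \subset H := subset_trans KH' (restr_sub _ _).
  split.
  - by rewrite subUset KH sub1set UH.
  - rewrite setUC cardsU1 UK cK cH' [#|U|](cardsD1 x) xU addnC.
    by [].
  move=> S [SK2 cS2 acS].
  have USn : U \notin S.
    apply/negP => US.
    have : 0 < #|S :\ U| by move: cS2; rewrite (cardsD1 U) US.
    case/card_gt0P => Y; rewrite !inE => /andP[nYU YS].
    move: (subsetP SK2 Y YS); rewrite !inE (negbTE nYU) orbF => YK.
    have := acS Y U YS US (sub_carrier (subsetP KH Y YK)).
    by move/eqP; rewrite (negbTE nYU).
  have SK : S \subset K.
    apply/subsetP=> Y YS; move: (subsetP SK2 Y YS); rewrite !inE => /orP[//|/eqP e].
    by move: USn; rewrite -e YS.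
  have := acK S (And3 SK cS2 acS); rewrite /misses; apply: contra => cSH.
  rewrite in_restr cSH -cH'; apply: subset_trans (carrierS SK) _.
  exact: carrierS KH'.
- have IH' Hi : Hi \in P -> [/\ Kf Hi \subset Hi, #|Kf Hi| = #|carrier Hi|
      & forall S, antichain (Kf Hi) S -> misses Hi S].
    move=> PHi; apply: IH => //; first exact: hyper_sub h0 (hp_sub hP PHi).
    exact: sat_block h0 sH hP PHi.
  have KfH Hi : Hi \in P -> Kf Hi \subset Hi by case/IH'.
  have KH : \bigcup_(Hi in P) Kf Hi \subset H.
    apply/subsetP=> X /bigcupP[Hi PHi XK].
    exact: (subsetP (hp_sub hP PHi)) (subsetP (KfH _ PHi) _ XK).
  split => //.
    rewrite (hp_card_union hP KfH) (hp_card hP); apply: eq_bigr => Hi PHi.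
    by case: (IH' _ PHi).
  move=> S [SK cS2 acS]; rewrite /misses; apply/negP => cSH.
  have [Hj PHj cSj] := hp_cover hP cSH.
  have SKj : S \subset Kf Hj.
    apply/subsetP=> X XS; have XK := subsetP SK X XS.
    have XH := subsetP KH X XK.
    have Xj : X \in Hj.
      apply: (hp_carrier h0 hP PHj XH).
      apply: subset_trans (sub_carrier XS) (sub_carrier cSj).
    case/bigcupP: XK => Hi PHi XKi.
    by rewrite (hp_block hP PHj PHi Xj (subsetP (KfH _ PHi) _ XKi)).
  case: (IH' _ PHj) => _ _ /(_ S (And3 SKj cS2 acS)).
  by rewrite /misses cSj.
Qed.

Lemma sum_eq_le (I : finType) (A : pred I) (a b : I -> nat) :
  (forall i, A i -> a i <= b i) -> \sum_(i | A i) a i = \sum_(i | A i) b i ->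
  forall i, A i -> a i = b i.
Proof.
move=> le e i Ai.
have := (leqif_sum (C := fun i => a i == b i) (fun i Ai => leqif_eq (le i Ai))).2.
by rewrite e eqxx => /esym/forall_inP/(_ i Ai)/eqP.
Qed.

Lemma top_notin_antichain H K S : antichain K S -> K \subset H ->
  carrier H \notin S.
Proof.
move=> [SK cS2 acS] KH; apply/negP => US.
have : 0 < #|S :\ carrier H| by move: cS2; rewrite (cardsD1 (carrier H)) US.
case/card_gt0P => Y; rewrite !inE => /andP[nYU YS].
have := acS Y _ YS US (sub_carrier (subsetP KH Y (subsetP SK Y YS))).
by move/eqP; rewrite (negbTE nYU).
Qed.

Lemma empty_case H M : carrier H = set0 -> hypergraph H -> M \subset H ->
  #|M| = #|carrier H| -> construction H M.
Proof.
move=> e h0 MH cM.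
have -> : H = set0.
  apply/eqP; rewrite -subset0; apply/subsetP=> X XH.
  have [x xX] := nonempty_mem h0 XH.
  have : x \in carrier H by apply/carrierP; exists X.
  by rewrite e inE.
have -> : M = set0 by apply/eqP; rewrite -cards_eq0 cM e cards0.
exact: constr_empty.
Qed.

Lemma constr_complete n : forall H M, #|carrier H| <= n -> hypergraph H ->
  atomic H -> saturated H -> M \subset H ->
  (forall S, antichain M S -> misses H S) -> #|M| = #|carrier H| ->
  construction H M.
Proof.
elim: n => [|n IHn] H M cn h0 aH sH MH ac cM.
  by apply: empty_case => //; apply/eqP; rewrite -cards_eq0 -leqn0.
case: (eqVneq (carrier H) set0) => [e|ne]; first exact: empty_case.
set U := carrier H in cn ne cM *.
have H0 : H != set0 by apply/eqP => e; move: ne; rewrite /U e carrier0 eqxx.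
case: (boolP (U \in H)) => [UH|nUH].
- have cH := conn_top h0 UH.
  have UM : U \in M.
    apply/negPn/negP => nUM.
    have MH' : U |: M \subset H by rewrite subUset sub1set UH MH.
    have ac' : forall S, antichain (U |: M) S -> misses H S.
      move=> S aS; have := top_notin_antichain aS MH'.
      case: aS => SK cS2 acS nUS; apply: ac; split => //.
      apply/subsetP=> Y YS; move: (subsetP SK Y YS); rewrite in_setU1 => /orP[/eqP e|//].
      by move: nUS; rewrite -/U -e YS.
    have := bound h0 MH' ac' sH.
    rewrite cardsU1 nUM cM add1n ltnNge => /negP; apply.
    exact: subset_leq_card (carrierS MH').
  have [p pU hp] := priv h0 MH ac UM.
  set M' := M :\ U.
  have cH' : carrier (restr H (U :\ p)) = U :\ p.
    by rewrite carrier_restr //; apply/setIidPl/subsetP=> y; rewrite inE => /andP[].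
  have C : construction (restr H (U :\ p)) M'.
    apply: IHn.
    + by rewrite cH'; move: cn; rewrite (cardsD1 p U) pU.
    + exact: hyper_sub h0 (restr_sub _ _).
    + exact: atomic_restr.
    + exact: saturated_restr.
    + apply/subsetP=> Y; rewrite !inE => /andP[nYU YM].
      have YH := subsetP MH Y YM.
      rewrite YH /=; apply/subsetP=> y yY; rewrite !inE.
      have YU : Y \subset U := sub_carrier YH.
      rewrite (subsetP YU y yY) andbT.
      apply: contraTneq yY => ->; apply: hp => //.
      by rewrite properEneq nYU.
    + move=> S [SK cS2 acS]; rewrite /misses.
      have : misses H S.
        by apply: ac; split => //; apply: subset_trans SK (subsetDl _ _).
      by apply: contra; apply: (subsetP (restr_sub _ _)).
    + rewrite cH'; have := cardsD1 U M; rewrite UM cM (cardsD1 p U) pU /=.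
      by move/eqP; rewrite eqn_add2l => /eqP.
  have := constr_conn aH ne cH pU C.
  by rewrite setUC setD1K.
- have ncH : ~ connected H by move=> cH; move: nUH; rewrite top_of_conn.
  have hP := Pm_hp h0 aH sH.
  have c2 := Pm_card2 aH H0 nUH.
  have blk Hi : Hi \in Pm H -> [/\ hypergraph Hi, atomic Hi, saturated Hi & Hi \subset H].
    case/imsetP=> Z _ ->; split.
    + exact: hyper_sub h0 (restr_sub _ _).
    + exact: atomic_restr.
    + exact: saturated_restr.
    + exact: restr_sub.
  have KfH Hi : Hi \in Pm H -> M :&: Hi \subset Hi by move=> _; apply: subsetIr.
  have acI Hi : Hi \in Pm H -> forall S, antichain (M :&: Hi) S -> misses Hi S.
    move=> PHi S [SK cS2 acS]; rewrite /misses.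
    have : misses H S by apply: ac; split => //; apply: subset_trans SK (subsetIl _ _).
    by apply: contra; case: (blk _ PHi) => _ _ _ /subsetP; apply.
  have leI Hi : Hi \in Pm H -> #|M :&: Hi| <= #|carrier Hi|.
    move=> PHi; case: (blk _ PHi) => hi ai si sub.
    apply: leq_trans (bound hi (subsetIr _ _) (acI _ PHi) si) _.
    exact: subset_leq_card (carrierS (subsetIr _ _)).
  have Mu : M = \bigcup_(Hi in Pm H) (M :&: Hi).
    apply/setP=> X; apply/idP/bigcupP => [XM|[Hi _]]; last by rewrite inE => /andP[].
    have [Hi PHi XHi] := hp_cover hP (subsetP MH X XM).
    by exists Hi => //; rewrite inE XM.
  have eqI : forall Hi, Hi \in Pm H -> #|M :&: Hi| = #|carrier Hi|.
    apply: sum_eq_le => //.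
    by rewrite -(hp_card_union hP KfH) -Mu cM (hp_card hP).
  rewrite Mu; apply: (constr_disc aH ncH (Pm_finest h0 aH sH) c2) => Hi PHi.
  case: (blk _ PHi) => hi ai si sub.
  apply: IHn => //.
  + by rewrite -ltnS; apply: leq_trans (Pm_lt h0 aH sH c2 PHi) cn.
  + exact: subsetIr.
  + exact: acI.
  + exact: eqI.
Qed.
End Aux.

Unset Implicit Arguments.

Theorem proposition6p11 (T : finType) (H M : {set {set T}}) :
  hypergraph H -> ASC H -> M \subset H ->
  ((forall S, antichain M S -> misses H S) /\ #|M| = #|carrier H|)
  <-> construction H M.
Proof.
move=> h0 [aH sH cH] MH; split.
- by case=> ac cM; apply: (constr_complete (leqnn _) h0 aH sH MH ac cM).
- by move=> c; case: (constr_sound c h0 sH) => _ cM ac; split.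
Qed.
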